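(* Let $m\ge 2$ be an integer and let $n$ be a positive integer with $m^j\le n<m^{j+1}$ for some integer $j\ge 0$, with base $m$ representation $n=\alpha_j m^j+\cdots+\alpha_1 m+\alpha_0$ ($\alpha_j>0$, $0\le\alpha_i\le m-1$). Then the number $b_m(n)$ of $m$-ary partitions of $n$ satisfies \[ b_m(n)=\sum_{k_j=0}^{\alpha_j}\ \sum_{k_{j-1}=0}^{\alpha_{j-1}+mk_j}\cdots\sum_{k_1=0}^{\alpha_1+mk_2}1, \] i.e. $b_m(n)$ is the number of integer tuples $(k_j,\ldots,k_1)$ with $0\le k_j\le\alpha_j$ and $0\le k_t\le \alpha_t+mk_{t+1}$ for $1\le t\le j-1$. In particular $b_m(n)=1$ when $j=0$.
   Context: An $m$-ary partition of a positive integer $n$ is a partition of $n$ in which every part is a power of $m$ (i.e. one of $1,m,m^2,\ldots$). $b_m(n)$ denotes the number of $m$-ary partitions of $n$. *)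

(* Defs.v *)
From mathcomp Require Import all_boot.
Set Implicit Arguments. Unset Strict Implicit. Unset Printing Implicit Defensive.

(* x is a power of m : x = m ^ k for some k (k <= x suffices as a bound when m >= 2) *)
Definition is_pow (m x : nat) : bool := [exists k : 'I_x.+1, x == m ^ k].

Definition is_mary_partition (m n : nat) (s : seq nat) : bool :=
  [&& sorted geq s, all (fun x => 0 < x) s, sumn s == n & all (is_pow m) s].

Fixpoint lists_upto (l : nat) (xs : seq nat) : seq (seq nat) :=
  [::] :: (if l is l'.+1 then [seq x :: s | x <- xs, s <- lists_upto l' xs] else [::]).

(* b_m(n): number of m-ary partitions of n.  Any partition of n has at most n parts,
   each in {1..n}, so it occurs exactly once in lists_upto n (iota 1 n). *)
Definition b (m n : nat) : nat :=
  count (is_mary_partition m n) (lists_upto n (iota 1 n)).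

Definition digit (m n i : nat) : nat := (n %/ m ^ i) %% m.

Fixpoint nested_sum (m n t c : nat) : nat :=
  if t is t'.+1 then
    \sum_(0 <= k < c.+1) nested_sum m n t' (digit m n t' + m * k)
  else 1.

(* Main.v *)
Require Import Defs.
From mathcomp Require Import all_boot zify.

Definition pows (m t : nat) := [seq m ^ i | i <- iota 0 t.+1].

Fixpoint P (m t N : nat) : seq (seq nat) :=
  if t is t'.+1 then
    [seq nseq a (m ^ t) ++ s | a <- iota 0 (N %/ m ^ t).+1, s <- P m t' (N - a * m ^ t)]
  else [:: nseq N 1].

Lemma geq_trans' : transitive geq.
Proof. by move=> y x z /= h1 h2; apply: leq_trans h2 h1. Qed.

Lemma mod_split m n t : n %% m ^ t.+1 = digit m n t * m ^ t + n %% m ^ t.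
Proof.
rewrite /digit expnS {1}(divn_eq (n %% (m * m ^ t)) (m ^ t)) -modn_divl.
by rewrite (modn_dvdm _ (dvdn_mull _ (dvdnn _))).
Qed.

Lemma P_S m t N : P m t.+1 N =
  [seq nseq a (m ^ t.+1) ++ s | a <- iota 0 (N %/ m ^ t.+1).+1, s <- P m t (N - a * m ^ t.+1)].
Proof. by []. Qed.

Lemma size_P m t N : size (P m t.+1 N) =
  \sum_(0 <= a < (N %/ m ^ t.+1).+1) size (P m t (N - a * m ^ t.+1)).
Proof.
by rewrite P_S size_allpairs_dep sumnE big_map.
Qed.

Lemma nested_P m n t c : 0 < m ->
  size (P m t (c * m ^ t + n %% m ^ t)) = nested_sum m n t c.
Proof.
move=> m0; elim: t c => [|t IH] c; first by [].
rewrite size_P /= divnMDl ?expn_gt0 ?m0 // divn_small ?ltn_pmod ?expn_gt0 ?m0 // addn0.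
rewrite big_nat_rev /=; apply: eq_big_nat => a /andP[_ ha].
rewrite -IH add0n subSS mod_split; congr (size (P _ _ _)).
rewrite expnS mulnBl.
have h1 : (c - a) * (m * m ^ t) <= c * (m * m ^ t) by rewrite leq_mul2r leq_subr orbT.
rewrite mulnDl mulnA (mulnC _ m).
have : (c - a) * (m * m ^ t) + a * (m * m ^ t) = c * (m * m ^ t).
  by rewrite -mulnDl subnK // -ltnS.
rewrite !mulnA; lia.
Qed.
Set Implicit Arguments. Unset Strict Implicit.

Definition Q m t N (s : seq nat) :=
  [&& sorted geq s, all (fun x => x \in pows m t) s & sumn s == N].

Lemma powsP m t x : reflect (exists2 i, i <= t & x = m ^ i) (x \in pows m t).
Proof.
apply: (iffP mapP) => [[i]|[i]]; rewrite ?mem_iota => hi ->; exists i => //.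
by rewrite mem_iota.
Qed.

Lemma pows_lt m t x : 1 < m -> x \in pows m t -> x < m ^ t.+1.
Proof. by move=> m1 /powsP[i hi ->]; rewrite ltn_exp2l. Qed.

Lemma pows_S m t x : x \in pows m t -> x \in pows m t.+1.
Proof. by move/powsP=> [i hi ->]; apply/powsP; exists i => //; apply: leqW. Qed.

Lemma pows_top m t : m ^ t \in pows m t.
Proof. by apply/powsP; exists t. Qed.

Lemma pows_ne m t x : x \in pows m t.+1 -> x != m ^ t.+1 -> x \in pows m t.
Proof.
move/powsP=> [i hi ->] hne; apply/powsP; exists i => //.
move: hi; rewrite leq_eqVlt => /orP[/eqP E|]; first by rewrite E eqxx in hne.
by rewrite ltnS => ->.
Qed.

Lemma decomp m t s : 1 < m -> sorted geq s -> all (fun x => x \in pows m t.+1) s ->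
  exists a s', s = nseq a (m ^ t.+1) ++ s' /\ all (fun x => x \in pows m t) s'.
Proof.
move=> m1; elim: s => [|y s0 IH]; first by move=> _ _; exists 0, [::].
move=> so /= /andP[hy al].
have so0 : sorted geq s0 by apply: path_sorted so.
have ge0 : all (geq y) s0 by apply: order_path_min geq_trans' so.
have [a [s' [E al']]] := IH so0 al.
case: (eqVneq y (m ^ t.+1)) => [Ey|Ny].
  by exists a.+1, s'; rewrite /= E Ey.
have hy' := pows_ne hy Ny.
exists 0, (y :: s0); split => //=; rewrite hy' /=.
apply/allP => z hz; apply: pows_ne; first by move/allP: al; apply.
have : z <= y by move/allP: ge0; apply.
move=> hzy; rewrite neq_ltn; apply/orP; left.
by apply: leq_ltn_trans hzy (pows_lt m1 hy').
Qed.

Lemma sorted_nseq_cat a x s' : sorted geq s' -> all (fun z => z <= x) s' ->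
  sorted geq (nseq a x ++ s').
Proof.
move=> so al; elim: a => [|a IH] //=.
rewrite (path_sortedE geq_trans') IH andbT all_cat al andbT.
by rewrite all_nseq /= leqnn orbT.
Qed.

Lemma mem_P m t N s : 1 < m -> (s \in P m t N) = Q m t N s.
Proof.
move=> m1; have m0 : 0 < m by apply: ltnW.
elim: t N s => [|t IH] N s.
  rewrite /= /Q /pows /= expn0 inE; apply/idP/idP.
    move/eqP ->; rewrite -(cats0 (nseq N 1)) sorted_nseq_cat //= cats0.
    by rewrite all_nseq /= inE eqxx orbT sumn_nseq mul1n eqxx.
  case/and3P => _ al /eqP su.
  have : all (pred1 1) s by apply: sub_all al => z; rewrite inE.
  move/all_pred1P => E; rewrite E; rewrite E sumn_nseq mul1n in su.
  by rewrite su.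
rewrite P_S; apply/idP/idP.
  case/allpairsPdep => a [s' [ha hs' ->]].
  move: hs'; rewrite IH => /and3P[so al /eqP su].
  move: ha; rewrite mem_iota add0n ltnS leq_divRL ?expn_gt0 ?m0 // => ha.
  rewrite /Q sorted_nseq_cat //; last first.
    by apply: sub_all al => z hz; apply: ltnW; apply: pows_lt.
  rewrite all_cat all_nseq pows_top orbT /= sumn_cat sumn_nseq su.
  rewrite (sub_all _ al) /=; last by move=> z; apply: pows_S.
  apply/eqP; rewrite mulnC subnKC //.
case/and3P => so al /eqP su.
have [a [s' [E al']]] := decomp m1 so al.
apply/allpairsPdep; exists a, s'; split => //.
  rewrite mem_iota add0n ltnS leq_divRL ?expn_gt0 ?m0 //.
  by rewrite -su E sumn_cat sumn_nseq mulnC leq_addr.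
move: so; rewrite E => /cat_sorted2[_ so']; rewrite IH /Q so' al' /=.
by rewrite -su E sumn_cat sumn_nseq mulnC addKn.
Qed.

Lemma uniq_P m t N : 1 < m -> uniq (P m t N).
Proof.
move=> m1; elim: t N => [|t IH] N //.
rewrite P_S; apply: allpairs_uniq_dep; first exact: iota_uniq.
  by move=> a _; apply: IH.
have key : forall p : {x : nat & seq nat}, p \in [seq existT (fun=> seq nat) x y | x <- iota 0 (N %/ m ^ t.+1).+1,
                                   y <- P m t (N - x * m ^ t.+1)] ->
   all (fun z => z < m ^ t.+1) (tagged p).
  move=> p /allpairsPdep[x [y [_ hy ->]]] /=.
  move: hy; rewrite mem_P // => /and3P[_ al _].
  by apply: sub_all al => z; apply: pows_lt.
move=> [a s1] [b s2] /key /= h1 /key /= h2 /= E.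
have c0 : forall s, all (fun z => z < m ^ t.+1) s -> count (pred1 (m ^ t.+1)) s = 0.
  move=> s hs; rewrite (eq_in_count (a2 := pred0)) ?count_pred0 //.
  by move=> z /(allP hs) hz /=; apply/negbTE; rewrite neq_ltn hz.
have eab : a = b.
  have := congr1 (count (pred1 (m ^ t.+1))) E.
  by rewrite !count_cat !count_nseq /= eqxx !mul1n c0 // c0 // !addn0.
subst b; have := congr1 (drop (size (nseq a (m ^ t.+1)))) E.
by rewrite !drop_size_cat // => ->.
Qed.

Lemma lists_upto_uniq l xs : uniq xs -> uniq (lists_upto l xs).
Proof.
move=> u; elim: l => [|l IH] //=.
rewrite allpairs_uniq // ?andbT.
  by apply/allpairsP => [[p [_ _]]].
by move=> [x s] [y s'] _ _ /= [-> ->].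
Qed.

Lemma mem_lists_upto l xs s :
  (s \in lists_upto l xs) = (size s <= l) && all (fun x => x \in xs) s.
Proof.
elim: l s => [|l IH] [|x s] //=; rewrite ?inE //.
rewrite /= ltnS; apply/allpairsP/idP.
  by move=> [[y s'] [/= hy hs' [-> ->]]]; rewrite hy -IH.
move=> /andP[hs /andP[hx al]]; exists (x, s); split => //=.
by rewrite IH hs.
Qed.

Lemma size_le_sumn s : all (fun x => 0 < x) s -> size s <= sumn s.
Proof. by elim: s => //= x s IH /andP[hx /IH]; rewrite -add1n; apply: leq_add. Qed.

Lemma le_sumn x s : x \in s -> x <= sumn s.
Proof.
elim: s => //= y s IH; rewrite inE => /orP[/eqP->|/IH h]; first exact: leq_addr.
by apply: leq_trans h (leq_addl _ _).
Qed.

Lemma ispow_iff m j n x : 1 < m -> x <= n -> n < m ^ j.+1 ->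
  ((0 < x) && is_pow m x) = (x \in pows m j).
Proof.
move=> m1 hx hn; apply/idP/idP.
  case/andP => _ /existsP [k /eqP E]; apply/powsP; exists k => //.
  by rewrite -ltnS -(ltn_exp2l _ _ m1) -E; apply: leq_ltn_trans hn.
case/powsP => i hi ->; rewrite expn_gt0 (ltnW m1) /=.
apply/existsP; have hi' : i < (m ^ i).+1 by rewrite ltnS ltnW // ltn_expl.
by exists (Ordinal hi').
Qed.

Lemma b_P m n j : 1 < m -> n < m ^ j.+1 -> b m n = size (P m j n).
Proof.
move=> m1 hn; rewrite /b -size_filter; apply: perm_size.
apply: uniq_perm; first by apply: filter_uniq; apply: lists_upto_uniq; apply: iota_uniq.
  exact: uniq_P.
move=> s; rewrite mem_filter mem_P // /Q /is_mary_partition.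
have E : sumn s == n -> all (fun x => 0 < x) s && all (is_pow m) s =
                        all (fun x => x \in pows m j) s.
  move=> /eqP su; rewrite -all_predI; apply: eq_in_all => x hx /=.
  by apply: (ispow_iff (n:=n)) => //; rewrite -su le_sumn.
case: (boolP (sumn s == n)) => su; last by rewrite !andbF andFb.
rewrite -(E su); case: (sorted geq s); rewrite /= ?andbF //.
case A: (all _ s); case B: (all (is_pow m) s); rewrite /= ?andbF //.
rewrite mem_lists_upto; apply/andP; split.
  by rewrite -{1}(eqP su); apply: size_le_sumn.
apply/allP => x hx; rewrite mem_iota add1n ltnS -(eqP su) le_sumn // andbT.
by move/allP: A; apply.
Qed.

Unset Implicit Arguments.
Theorem theorem1p2 (m n j : nat) :
  2 <= m -> m ^ j <= n < m ^ j.+1 ->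
  b m n = nested_sum m n j (digit m n j).
Proof.
move=> m1 /andP[_ hn].
rewrite (b_P m1 hn).
have D : digit m n j = n %/ m ^ j.
  rewrite /digit modn_small // ltn_divLR ?expn_gt0 ?(ltnW m1) //.
  by rewrite -expnS.
by rewrite D -(nested_P m n j (n %/ m ^ j) (ltnW m1)) -divn_eq.
Qed.
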